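(* Let $\phi$ and $\psi$ be injective endomorphisms of $F_n$. Then there is a constant $M$ such that for all distinct $\alpha_1,\alpha_2\in \mathrm{Eq}(\widehat\phi,\widehat\psi)$, setting $\alpha=\alpha_1\wedge\alpha_2$ (a finite word), the reduced form of $(\alpha\phi)^{-1}(\alpha\psi)$ has length at most $M$.
   Context: $F_n$ is the free group on a finite basis $A$; elements are identified with reduced words over $\widetilde A=A\cup A^{-1}$, $|u|$ is the length of a reduced word; maps are written on the right. For reduced (finite or infinite) words $u,v$, $u\wedge v$ is their longest common prefix. $\widehat F_n$ is the completion of $F_n$ for the prefix metric $d(u,v)=2^{-|u\wedge v|}$ ($u\ne v$), i.e. the set of all finite and infinite reduced words over $\widetilde A$. An injective endomorphism $\phi$ of $F_n$ has a unique continuous extension $\widehat\phi$ to $\widehat F_n$. For maps $f,g$ with the same domain, $\mathrm{Eq}(f,g)=\{x\mid xf=xg\}$. *)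

(* Defs.v *)
(* free group F_A on a finite basis A, realised concretely
   as reduced words over A x bool (bool = true means the inverse letter). *)
From mathcomp Require Import all_boot.
Set Implicit Arguments. Unset Strict Implicit. Unset Printing Implicit Defensive.

Section FreeGroup.
Variable A : finType.

Definition letter := (A * bool)%type.
Definition linv (x : letter) : letter := (x.1, ~~ x.2).

Fixpoint reduced (w : seq letter) : bool :=
  match w with
  | x :: ((y :: _) as w') => (y != linv x) && reduced w'
  | _ => true
  end.

Definition push (x : letter) (s : seq letter) : seq letter :=
  if s is y :: s' then (if y == linv x then s' else x :: s) else [:: x].
Definition reduce (w : seq letter) : seq letter := foldr push [::] w.

Definition winv (w : seq letter) : seq letter := rev (map linv w).

Definition gmul (u v : seq letter) : seq letter := reduce (u ++ v).

(* endomorphism of F_A determined by the images f a of the basis letters;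
   (apply f w) is w f, the reduced form of the image *)
Definition apply (f : A -> seq letter) (w : seq letter) : seq letter :=
  reduce (flatten (map (fun x : letter => if x.2 then winv (f x.1) else f x.1) w)).

Definition injective_endo (f : A -> seq letter) : Prop :=
  forall u v, reduced u -> reduced v -> apply f u = apply f v -> u = v.

(* Completion \hat F_A: finite and infinite reduced words, encoded as
   maps nat -> option letter (None = past the end of a finite word). *)
Definition hword := nat -> option letter.

Definition is_hword (x : hword) : Prop :=
  (forall i, x i = None -> x i.+1 = None) /\
  (forall i a b, x i = Some a -> x i.+1 = Some b -> b != linv a).

Definition emb (w : seq letter) : hword := fun i => nth None (map Some w) i.

(* x and y have the same first k letters, i.e. d(x,y) <= 2^-k *)
Definition agree (k : nat) (x y : hword) : Prop := forall i, i < k -> x i = y i.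

Definition continuous_hat (F : hword -> hword) : Prop :=
  forall x, is_hword x -> forall k, exists m, forall y, is_hword y ->
    agree m x y -> agree k (F x) (F y).

Definition hat_ext (f : A -> seq letter) (F : hword -> hword) : Prop :=
  (forall x, is_hword x -> is_hword (F x)) /\
  (forall w, reduced w -> F (emb w) = emb (apply f w)) /\
  continuous_hat F.

Definition is_lcp (x y : hword) (p : seq letter) : Prop :=
  agree (size p) x (emb p) /\ agree (size p) y (emb p) /\ x (size p) <> y (size p).
End FreeGroup.

(* Main.v *)
Require Import Defs.
From mathcomp Require Import all_boot zify.
From Stdlib Require Import Classical.
Set Implicit Arguments. Unset Strict Implicit. Unset Printing Implicit Defensive.

Section Aux.
Variable A : finType.
Implicit Types (x y z : letter A) (s t w p r : seq (letter A)).

Lemma linvK x : linv (linv x) = x.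
Proof. by case: x => a b; rewrite /linv /= negbK. Qed.

Lemma winvK w : winv (winv w) = w.
Proof. by rewrite /winv map_rev revK -map_comp (eq_map linvK) map_id. Qed.
Lemma winv_cat s t : winv (s ++ t) = winv t ++ winv s.
Proof. by rewrite /winv map_cat rev_cat. Qed.
Lemma winv_cons x s : winv (x :: s) = winv s ++ [:: linv x].
Proof. by rewrite /winv /= rev_cons -cats1. Qed.
Lemma size_winv s : size (winv s) = size s.
Proof. by rewrite /winv size_rev size_map. Qed.

Lemma reduced_cons x s :
  reduced (x :: s) = (if s is y :: _ then y != linv x else true) && reduced s.
Proof. by case: s. Qed.

Lemma reduced_tail x s : reduced (x :: s) -> reduced s.
Proof. by rewrite reduced_cons => /andP[]. Qed.

Lemma reduced_catl s t : reduced (s ++ t) -> reduced s.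
Proof.
elim: s => [|x s IH] // H.
rewrite cat_cons reduced_cons in H; case/andP: H => H1 H2.
rewrite reduced_cons (IH H2) andbT.
by case: s H1 {IH H2}.
Qed.

Lemma reduced_catr s t : reduced (s ++ t) -> reduced t.
Proof. elim: s => [|x s IH] //= H; apply: IH; exact: (reduced_tail H). Qed.

Lemma reduced_take k s : reduced s -> reduced (take k s).
Proof. by rewrite -{1}(cat_take_drop k s) => /reduced_catl. Qed.
Lemma reduced_drop k s : reduced s -> reduced (drop k s).
Proof. by rewrite -{1}(cat_take_drop k s) => /reduced_catr. Qed.

Lemma reduced_push x s : reduced s -> reduced (push x s).
Proof.
case: s => [|y s] // H; rewrite /push; case: eqP => [_|/eqP Hy]; first exact: (reduced_tail H).
by rewrite reduced_cons Hy H.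
Qed.

Lemma reduce_reduced w : reduced (reduce w).
Proof. by elim: w => //= x w IH; apply: reduced_push. Qed.

Lemma reduce_id w : reduced w -> reduce w = w.
Proof.
elim: w => // x w IH H /=; rewrite IH; last exact: (reduced_tail H).
move: H; rewrite reduced_cons; case: w {IH} => //= y w /andP[H _].
by rewrite (negbTE H).
Qed.

Lemma push_cancel x r : reduced r -> push (linv x) (push x r) = r.
Proof.
case: r => [|y r] /=; first by rewrite linvK eqxx.
case: eqP => [->|/eqP Hy] H.
  case: r H => [|z r] //= /andP[Hz _]; rewrite linvK in Hz.
  by rewrite linvK (negbTE Hz).
by rewrite /= linvK eqxx.
Qed.

Lemma push_cancel' x r : reduced r -> push x (push (linv x) r) = r.
Proof. by move=> H; rewrite -{1}(linvK x) push_cancel. Qed.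

Lemma reduce_cat s t : reduce (s ++ t) = foldr (@push A) (reduce t) s.
Proof. by rewrite /reduce foldr_cat. Qed.

Lemma reduce_winvl p w : reduce (winv p ++ p ++ w) = reduce w.
Proof.
elim: p => //= x p IH.
rewrite winv_cons -catA reduce_cat /= push_cancel ?reduce_reduced //.
by rewrite -reduce_cat.
Qed.

Lemma reduce_winvr p w : reduce (p ++ winv p ++ w) = reduce w.
Proof. by rewrite -{1}(winvK p) reduce_winvl. Qed.

Lemma reduce_mid s p w : reduce (s ++ p ++ winv p ++ w) = reduce (s ++ w).
Proof. by rewrite reduce_cat reduce_winvr -reduce_cat. Qed.

Lemma reduce_catr s t : reduce (s ++ reduce t) = reduce (s ++ t).
Proof. by rewrite !reduce_cat (reduce_id (reduce_reduced t)). Qed.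

Lemma reduce_push_cat x r t : reduce (push x r ++ t) = push x (reduce (r ++ t)).
Proof.
case: r => [|y r] //=; case: eqP => [->|_] //=.
by rewrite push_cancel' // reduce_reduced.
Qed.

Lemma reduce_catl s t : reduce (reduce s ++ t) = reduce (s ++ t).
Proof. by elim: s => //= x s IH; rewrite reduce_push_cat IH. Qed.

Definition hdiff s t := match s, t with a :: _, b :: _ => a != b | _, _ => true end.

Lemma foldr_push_winv s t : reduced s -> reduced t -> hdiff s t ->
  foldr (@push A) t (winv s) = winv s ++ t.
Proof.
elim: s t => [|z s IH] t Hs Ht Hd; first by [].
rewrite winv_cons foldr_cat /=.
have -> : push (linv z) t = linv z :: t.
  case: t Ht Hd => //= b t _ Hb; rewrite linvK; case: eqP => // E.
  by rewrite E eqxx in Hb.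
rewrite IH -?catA //; first exact: (reduced_tail Hs).
  rewrite reduced_cons Ht andbT; case: t Hd {Ht} => //= b t; by rewrite linvK eq_sym.
by move: Hs; rewrite reduced_cons; case: s {IH Hd} => //= c s /andP[].
Qed.

End Aux.

Section Aux2.
Variable A : finType.
Implicit Types (x y z : letter A) (s t u w p r : seq (letter A)).

Fixpoint lcpn s t := match s, t with
  | a :: s', b :: t' => if a == b then (lcpn s' t').+1 else 0
  | _, _ => 0 end.

Lemma lcpnC s t : lcpn s t = lcpn t s.
Proof.
elim: s t => [|a s IH] [|b t] //=.
by case: eqP => [->|/eqP H]; rewrite ?eqxx ?IH // eq_sym (negbTE H).
Qed.

Lemma lcpn_sizel s t : lcpn s t <= size s.
Proof. elim: s t => [|a s IH] [|b t] //=; case: eqP => //= _; exact: IH. Qed.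
Lemma lcpn_sizer s t : lcpn s t <= size t.
Proof. by rewrite lcpnC lcpn_sizel. Qed.

Lemma lcpn_refl s : lcpn s s = size s.
Proof. by elim: s => //= a s ->; rewrite eqxx. Qed.

Lemma lcpn_take s t : take (lcpn s t) s = take (lcpn s t) t.
Proof. elim: s t => [|a s IH] [|b t] //=; case: eqP => //= ->; by rewrite IH. Qed.

Lemma lcpn_drop s t : hdiff (drop (lcpn s t) s) (drop (lcpn s t) t).
Proof.
elim: s t => [|a s IH] [|b t] //=; case: eqP => //= /eqP; by [].
Qed.

Lemma lcpn_ultra s t u : minn (lcpn s t) (lcpn t u) <= lcpn s u.
Proof.
elim: s t u => [|a s IH] [|b t] [|c u] //=; try by rewrite ?minn0 ?min0n.
case: (a =P b) => [<-|_]; last by rewrite min0n.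
case: (a =P c) => _; [by rewrite minnSS ltnS IH | by rewrite minn0].
Qed.

Lemma lcpn_takeN N s t : lcpn (take N s) (take N t) = minn N (lcpn s t).
Proof.
elim: N s t => [|N IH] [|a s] [|b t] //=; rewrite ?min0n ?minn0 //.
case: eqP => // _; by rewrite IH minnSS.
Qed.

Definition dist s t := size (reduce (winv s ++ t)).

Lemma dist_lcpn s t : reduced s -> reduced t ->
  dist s t = size s + size t - 2 * lcpn s t.
Proof.
move=> Hs Ht; rewrite /dist.
have Hk1 := lcpn_sizel s t; have Hk2 := lcpn_sizer s t.
set k := lcpn s t in Hk1 Hk2 *.
have Hd := lcpn_drop s t; rewrite -/k in Hd.
rewrite -{1}(cat_take_drop k s) -{1}(cat_take_drop k t) -(lcpn_take s t) -/k.
rewrite winv_cat -catA reduce_cat reduce_winvl.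
rewrite (reduce_id (reduced_drop k Ht)) foldr_push_winv //;
  try exact: reduced_drop.
by rewrite size_cat size_winv !size_drop; lia.
Qed.

Lemma dist_tri s t u : reduced s -> reduced t -> reduced u ->
  dist s u <= dist s t + dist t u.
Proof.
move=> Hs Ht Hu; rewrite !dist_lcpn //.
have := lcpn_ultra s t u; have := lcpn_sizel t u; have := lcpn_sizer s t.
have := lcpn_sizel s u; have := lcpn_sizer s u. lia.
Qed.

Definition img (f : A -> seq (letter A)) s :=
  flatten (map (fun x : letter A => if x.2 then winv (f x.1) else f x.1) s).

Lemma applyE f s : apply f s = reduce (img f s).
Proof. by []. Qed.

Lemma img_cat f s t : img f (s ++ t) = img f s ++ img f t.
Proof. by rewrite /img map_cat flatten_cat. Qed.

Lemma apply_cat f s t : apply f (s ++ t) = reduce (apply f s ++ apply f t).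
Proof. by rewrite !applyE img_cat reduce_catr reduce_catl. Qed.

Lemma apply_reduced f s : reduced (apply f s).
Proof. exact: reduce_reduced. Qed.

Lemma apply_nil (f : A -> seq (letter A)) : apply f [::] = [::].
Proof. by []. Qed.

Lemma img_linv f x : img f [:: linv x] = winv (img f [:: x]).
Proof.
case: x => a [] /=; rewrite /img /= !cats0 //; by rewrite winvK.
Qed.

Lemma apply_push f x r : apply f (push x r) = apply f (x :: r).
Proof.
case: r => [|y r] //=; case: eqP => [->|_] //.
rewrite !applyE.
have -> : img f (x :: linv x :: r) = img f [:: x] ++ winv (img f [:: x]) ++ img f r.
  by rewrite -img_linv -!img_cat.
by rewrite reduce_winvr.
Qed.

Lemma apply_reduce f s : apply f (reduce s) = apply f s.
Proof.
elim: s => //= x s IH.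
rewrite apply_push -cat1s apply_cat IH -apply_cat.
by [].
Qed.

Definition Lf (f : A -> seq (letter A)) := \max_(a : A) size (f a).

Lemma size_reduce s : size (reduce s) <= size s.
Proof.
elim: s => //= x s IH; case: (reduce s) IH => [|y r] //= H.
case: eqP => _ /=; lia.
Qed.

Lemma size_apply f s : size (apply f s) <= Lf f * size s.
Proof.
rewrite applyE; apply: leq_trans (size_reduce _) _.
elim: s => [|x s IH] //=; rewrite /img /= size_cat -/(img f s) mulnS.
apply: leq_add => //.
have H : size (f x.1) <= Lf f := @leq_bigmax _ (fun a => size (f a)) x.1.
by case: (x.2); rewrite ?size_winv.
Qed.

Lemma dist_apply_cat f s t : dist (apply f s) (apply f (s ++ t)) = size (apply f t).
Proof.
rewrite /dist apply_cat reduce_catr reduce_winvl.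
by rewrite (reduce_id (apply_reduced f t)).
Qed.

Lemma dist_seg f p (s : seq (letter A)) i j : i <= j ->
  dist (apply f (p ++ take i s)) (apply f (p ++ take j s)) = size (apply f (drop i (take j s))).
Proof.
move=> Hij.
have -> : p ++ take j s = (p ++ take i s) ++ drop i (take j s).
  by rewrite -catA -{1}(cat_take_drop i (take j s)) take_takel.
exact: dist_apply_cat.
Qed.

Lemma dist_branch f p s t :
  dist (apply f (p ++ s)) (apply f (p ++ t)) = size (apply f (winv s ++ t)).
Proof.
rewrite -(apply_reduce f (p ++ t)) -(reduce_mid p s t) apply_reduce catA.
exact: dist_apply_cat.
Qed.

Fixpoint allw (n : nat) : seq (seq (letter A)) :=
  if n is n'.+1 then [::] :: [seq x :: w | x <- enum {: A * bool}, w <- allw n']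
  else [:: [::]].

Lemma allwP n w : size w <= n -> w \in allw n.
Proof.
elim: n w => [|n IH] [|x w] //= H.
rewrite inE; apply/orP; right.
apply: (allpairs_f (fun x w => x :: w)); first by rewrite mem_enum.
exact: IH.
Qed.

Lemma fin_seq f (T0 : seq (seq (letter A))) : injective_endo f ->
  exists B, forall s, reduced s -> apply f s \in T0 -> size s <= B.
Proof.
move=> Hf; elim: T0 => [|t T0 [B IH]]; first by exists 0.
case: (classic (exists s0, reduced s0 /\ apply f s0 = t)) => [[s0 [H0 E0]]|Hn].
  exists (maxn B (size s0)) => s Hs; rewrite inE => /orP[/eqP E|Hm].
    have -> : s = s0 by apply: Hf => //; rewrite E E0.
    exact: leq_maxr.
  by apply: leq_trans (leq_maxl B _); apply: IH.
exists B => s Hs; rewrite inE => /orP[/eqP E|Hm]; last exact: IH.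
by case: Hn; exists s.
Qed.

Lemma fin_bound f : injective_endo f -> forall n,
  exists B, forall s, reduced s -> size (apply f s) <= n -> size s <= B.
Proof.
move=> Hf n; have [B HB] := fin_seq (allw n) Hf.
exists B => s Hs Hn; apply: HB => //; exact: allwP.
Qed.

End Aux2.

Section Aux3.
Variable A : finType.
Implicit Types (s t u w p : seq (letter A)).

Lemma step1 s t u m L : reduced s -> reduced t -> dist s t <= L ->
  lcpn s u < m -> m <= lcpn t u -> size t <= m + L.
Proof.
move=> Hs Ht; rewrite dist_lcpn //.
have := lcpn_ultra s t u; have := lcpn_sizel s t; lia.
Qed.

Lemma step2 s t u m L : reduced s -> reduced t -> dist s t <= L ->
  m < lcpn s u -> lcpn t u <= m -> size t + m + 1 <= L + 2 * lcpn s t /\ lcpn s t <= m.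
Proof.
move=> Hs Ht; rewrite dist_lcpn //.
have := lcpn_ultra t s u; have := lcpn_sizel s u; rewrite (lcpnC t s); lia.
Qed.

Lemma dist_step (f : A -> seq (letter A)) p s k :
  dist (apply f (p ++ take k s)) (apply f (p ++ take k.+1 s)) <= Lf f.
Proof.
rewrite dist_seg //; apply: leq_trans (size_apply _ _) _.
have : size (drop k (take k.+1 s)) <= 1.
  rewrite size_drop size_take_min; lia.
move=> H; apply: leq_trans (leq_mul (leqnn _) H) _; by rewrite muln1.
Qed.

Lemma cross (f : A -> seq (letter A)) p s z m :
  m <= lcpn (apply f (p ++ s)) z -> lcpn (apply f p) z < m ->
  exists i, [/\ 0 < i, i <= size s, m <= lcpn (apply f (p ++ take i s)) z &
                size (apply f (p ++ take i s)) <= m + Lf f].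
Proof.
move=> H1 H2.
have ex1 : exists i, m <= lcpn (apply f (p ++ take i s)) z.
  by exists (size s); rewrite take_size.
have [i0 Hi0 Hmin] := ex_minnP ex1.
have Hi0s : i0 <= size s by apply: Hmin; rewrite take_size.
case: i0 Hi0 Hmin Hi0s => [|k] Hi0 Hmin Hi0s.
  by rewrite take0 cats0 in Hi0; lia.
exists k.+1; split => //.
apply: (step1 (apply_reduced _ _) (apply_reduced _ _) (dist_step f p s k) _ Hi0).
rewrite ltnNge; apply/negP => H; have := Hmin _ H; lia.
Qed.

Lemma bcl (f : A -> seq (letter A)) : injective_endo f -> exists C, forall w i, reduced w ->
  size (apply f (take i w)) - C <= lcpn (apply f (take i w)) (apply f w).
Proof.
move=> Hf; set L := Lf f; have [B HB] := fin_bound Hf (L + L).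
exists (L * B + L) => w s Hw.
case: (leqP s (size w)) => [Hs|Hlt]; last first.
  rewrite take_oversize ?(ltnW Hlt) // lcpn_refl; lia.
set h := fun k => apply f (take k w).
have Hh : forall k, reduced (h k) by move=> k; apply: apply_reduced.
have hP : apply f w = h (size w) by rewrite /h take_size.
rewrite hP -/(h s).
set m := lcpn (h s) (h (size w)).
case: (leqP (size (h s)) m) => Hsm; first lia.
have Hd : forall i j, i <= j -> dist (h i) (h j) = size (apply f (drop i (take j w))).
  by move=> i j Hij; have := dist_seg f [::] w Hij.
have Hd1 : forall k, dist (h k) (h k.+1) <= L by move=> k; exact: (dist_step f [::] w k).
have ex1 : exists i, m <= lcpn (h i) (h s) by exists s; rewrite lcpn_refl; lia.
have [i0 Hi0 Hmin0] := ex_minnP ex1.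
have Hi0s : i0 <= s by apply: Hmin0; rewrite lcpn_refl; lia.
have E1 : size (h i0) <= m + L.
  case: i0 Hi0 Hmin0 Hi0s => [|k] Hi0 Hmin0 Hi0s.
    by rewrite /h take0 apply_nil /=; lia.
  apply: (step1 (Hh k) (Hh k.+1) (Hd1 k) _ Hi0).
  rewrite ltnNge; apply/negP => H; have := Hmin0 _ H; lia.
have ex2 : exists k, lcpn (h (s + k)) (h s) <= m.
  by exists (size w - s); rewrite subnKC // lcpnC.
have [j0 Hj0 Hmin2] := ex_minnP ex2.
have Hj0w : j0 <= size w - s by apply: Hmin2; rewrite subnKC // lcpnC.
case: j0 Hj0 Hmin2 Hj0w => [|k] Hj0 Hmin2 Hj0w.
  by rewrite addn0 lcpn_refl in Hj0; lia.
have Hk : m < lcpn (h (s + k)) (h s).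
  rewrite ltnNge; apply/negP => H; have := Hmin2 _ H; lia.
rewrite addnS in Hj0.
have [E2a E2b] := step2 (Hh _) (Hh _) (Hd1 (s + k)) Hk Hj0.
set l := lcpn (h (s + k)) (h (s + k).+1) in E2a E2b.
have Hl1 : l <= lcpn (h i0) (h (s + k).+1).
  have U1 := lcpn_ultra (h i0) (h s) (h (s + k)).
  have U2 := lcpn_ultra (h i0) (h (s + k)) (h (s + k).+1).
  rewrite (lcpnC (h s)) in U1; rewrite -/l in U2; lia.
have Hdij : dist (h i0) (h (s + k).+1) <= L + L.
  rewrite dist_lcpn //; lia.
have Hmid : size (drop i0 (take (s + k).+1 w)) <= B.
  apply: HB; first by apply: reduced_drop; apply: reduced_take.
  rewrite -Hd //; lia.
rewrite size_drop size_takel in Hmid; last lia.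
have Hda : dist (h i0) (h s) <= L * B.
  rewrite Hd //; apply: leq_trans (size_apply _ _) _; apply: leq_mul => //.
  rewrite size_drop size_takel //; lia.
rewrite dist_lcpn // in Hda.
have := lcpn_sizel (h i0) (h s).
set LB := L * B in Hda *; lia.
Qed.

Lemma hdiff_take i j s t : 0 < i -> 0 < j -> hdiff s t -> hdiff (take i s) (take j t).
Proof. by case: i j s t => [|i] [|j] [|a s] [|b t]. Qed.

Lemma ubl (f : A -> seq (letter A)) : injective_endo f -> exists C, forall p s t,
  reduced (p ++ s) -> reduced (p ++ t) -> hdiff s t ->
  lcpn (apply f (p ++ s)) (apply f (p ++ t)) <= size (apply f p) + C.
Proof.
move=> Hf; set L := Lf f; have [B HB] := fin_bound Hf (L + L).
exists (L * B) => p s t Hs Ht Hst.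
set P1 := apply f (p ++ s); set P2 := apply f (p ++ t).
set m := lcpn P1 P2.
case: (leqP m (size (apply f p))) => Hm; first lia.
have [i [Hi1 Hi2 Hi3 Hi4]] := @cross f p s P1 m ltac:(by rewrite lcpn_refl; exact: lcpn_sizel)
  (leq_ltn_trans (lcpn_sizel _ _) Hm).
rewrite -/m in Hi3 Hi4.
have [j [Hj1 Hj2 Hj3 Hj4]] := @cross f p t P2 m ltac:(by rewrite lcpn_refl; exact: lcpn_sizer)
  (leq_ltn_trans (lcpn_sizel _ _) Hm).
set x1 := apply f (p ++ take i s) in Hi3 Hi4.
set y1 := apply f (p ++ take j t) in Hj3 Hj4.
have Hxy : m <= lcpn x1 y1.
  have U1 := lcpn_ultra x1 P1 P2; have U2 := lcpn_ultra x1 P2 y1.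
  rewrite (lcpnC P2 y1) in U2; rewrite -/m in U1; lia.
have Hd : dist x1 y1 <= L + L.
  rewrite dist_lcpn ?apply_reduced //; lia.
rewrite /x1 /y1 dist_branch in Hd.
have Rs : reduced (take i s) by apply: reduced_take; apply: reduced_catr Hs.
have Rt : reduced (take j t) by apply: reduced_take; apply: reduced_catr Ht.
have E0 : reduce (winv (take i s) ++ take j t) = winv (take i s) ++ take j t.
  by rewrite reduce_cat (reduce_id Rt) foldr_push_winv // hdiff_take.
have Hz := HB _ (eq_ind _ (fun q => reduced q) (reduce_reduced _) _ E0) Hd.
rewrite size_cat size_winv !size_takel // in Hz.
have Hdu : dist (apply f p) x1 <= L * B.
  rewrite /x1 dist_apply_cat; apply: leq_trans (size_apply _ _) _.
  apply: leq_mul => //; rewrite size_takel //; lia.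
rewrite dist_lcpn ?apply_reduced // in Hdu.
have := lcpn_sizel (apply f p) x1; have := lcpn_sizel x1 P1.
set LB := L * B in Hdu *; lia.
Qed.

End Aux3.

Section Aux4.
Variable A : finType.
Implicit Types (s t u w p : seq (letter A)) (x : hword A).

Fixpoint pre (m : nat) (x : hword A) : seq (letter A) :=
  if m is m'.+1 then (if x 0 is Some a then a :: pre m' (fun i => x i.+1) else [::])
  else [::].

Lemma hword_shift x : is_hword x -> is_hword (fun i => x i.+1).
Proof. by case=> H1 H2; split => [i|i a b]; [apply: H1 | apply: H2]. Qed.

Lemma hword_none x : is_hword x -> x 0 = None -> forall i, x i = None.
Proof. by case=> H1 _ H0; elim => // i; exact: H1. Qed.

Lemma emb_nil i : emb ([::] : seq (letter A)) i = None.
Proof. by rewrite /emb nth_nil. Qed.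

Lemma pre_spec m x : is_hword x -> forall i, i < m -> emb (pre m x) i = x i.
Proof.
elim: m x => [|m IH] x Hx i Hi //=.
case E: (x 0) => [a|].
  case: i Hi => [|i] Hi; first by rewrite E.
  have := IH _ (hword_shift Hx) i Hi; by rewrite /emb.
by rewrite emb_nil (hword_none Hx E).
Qed.

Lemma pre_reduced m x : is_hword x -> reduced (pre m x).
Proof.
elim: m x => [|m IH] x Hx //=.
case E: (x 0) => [a|] //.
rewrite reduced_cons IH ?andbT; last exact: hword_shift.
case: m {IH} => [|m] //=; case E1: (x 1) => [b|] //.
exact: Hx.2 0 a b E E1.
Qed.

Lemma emb_hword s : reduced s -> is_hword (emb s).
Proof.
move=> Hs; split; rewrite /emb.
  by elim: s {Hs} => [|a s IH] [|i] //=; exact: IH.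
elim: s Hs => [|a s IH] Hs [|i] c d //=.
  case: s Hs {IH} => [|b s] //= /andP[Hb _] [<-] [<-] //.
move=> H1 H2; exact: (IH (reduced_tail Hs) i c d H1 H2).
Qed.

Lemma agree_take N s t : agree N (emb s) (emb t) -> take N s = take N t.
Proof.
elim: N s t => [|N IH] [|a s] [|b t] H //=.
- by move: (H 0 (ltn0Sn _)); rewrite /emb.
- by move: (H 0 (ltn0Sn _)); rewrite /emb.
- move: (H 0 (ltn0Sn _)); rewrite /emb /= => -[->]; congr (_ :: _).
  apply: IH => i Hi; exact: (H i.+1).
Qed.

Lemma emb_drop k s i : emb (drop k s) i = emb s (k + i).
Proof. by rewrite /emb map_drop nth_drop. Qed.

End Aux4.

Unset Implicit Arguments.

Theorem lemma2p2 (A : finType) (phi psi : A -> seq (letter A))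
  (Hphi : injective_endo phi) (Hpsi : injective_endo psi)
  (Phi Psi : hword A -> hword A)
  (HPhi : hat_ext phi Phi) (HPsi : hat_ext psi Psi) :
  exists M : nat,
    forall (a1 a2 : hword A), is_hword a1 -> is_hword a2 ->
      (forall i, Phi a1 i = Psi a1 i) -> (forall i, Phi a2 i = Psi a2 i) ->
      a1 <> a2 ->
      forall alpha : seq (letter A), is_lcp a1 a2 alpha ->
        size (gmul (winv (apply phi alpha)) (apply psi alpha)) <= M.
Proof.
have [C1 H1] := bcl Hphi; have [C2 H2] := bcl Hpsi.
have [C3 H3] := ubl Hphi; have [C4 H4] := ubl Hpsi.
exists (6 * (C1 + C2 + C3 + C4)) => a1 a2 Ha1 Ha2 E1 E2 Hne al [Hal1 [Hal2 Hal3]].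
pose N := size (apply phi al) + size (apply psi al) + 2 * (C1 + C2 + C3 + C4) + 1.
have getb : forall a, is_hword a -> (forall i, Phi a i = Psi a i) ->
    agree (size al) a (emb al) ->
  exists b, [/\ reduced b, take (size al) b = al, (forall i, i <= size al -> emb b i = a i) &
    take N (apply phi b) = take N (apply psi b)].
  move=> a Ha Ea Hal.
  case: HPhi => _ [HPe HPc]; case: HPsi => _ [HQe HQc].
  have [m1 Hm1] := HPc a Ha N; have [m2 Hm2] := HQc a Ha N.
  pose b := pre (m1 + m2 + size al + 1) a.
  have Rb : reduced b := pre_reduced _ Ha.
  have Hb : forall i, i < m1 + m2 + size al + 1 -> emb b i = a i := pre_spec Ha.
  exists b; split => //.
  - rewrite -{2}(take_size al); apply: agree_take => i Hi; rewrite Hb ?Hal //; lia.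
  - move=> i Hi; apply: Hb; lia.
  - apply: agree_take => i Hi.
    have A1 := Hm1 (emb b) (emb_hword Rb) (fun j Hj => esym (Hb j ltac:(lia))) i Hi.
    have A2 := Hm2 (emb b) (emb_hword Rb) (fun j Hj => esym (Hb j ltac:(lia))) i Hi.
    by rewrite HPe // in A1; rewrite HQe // in A2; rewrite -A1 -A2 Ea.
have [b1 [R1 T1 S1 Q1]] := getb a1 Ha1 E1 Hal1.
have [b2 [R2 T2 S2 Q2]] := getb a2 Ha2 E2 Hal2.
have B1 : b1 = al ++ drop (size al) b1 by rewrite -{1}(cat_take_drop (size al) b1) T1.
have B2 : b2 = al ++ drop (size al) b2 by rewrite -{1}(cat_take_drop (size al) b2) T2.
have Hd : hdiff (drop (size al) b1) (drop (size al) b2).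
  have F1 := emb_drop (size al) b1 0; have F2 := emb_drop (size al) b2 0.
  rewrite addn0 S1 // in F1; rewrite addn0 S2 // in F2.
  case: (drop (size al) b1) F1 => [|c r1] //; case: (drop (size al) b2) F2 => [|d r2] //=.
  rewrite /emb /= => F2 F1; apply/eqP => Ecd; apply: Hal3.
  by rewrite -F1 -F2 Ecd.
have Hu1 := H1 b1 (size al) R1; rewrite T1 in Hu1.
have Hu2 := H1 b2 (size al) R2; rewrite T2 in Hu2.
have Hv1 := H2 b1 (size al) R1; rewrite T1 in Hv1.
have Hv2 := H2 b2 (size al) R2; rewrite T2 in Hv2.
have HU := H3 al (drop (size al) b1) (drop (size al) b2) ltac:(rewrite -B1; exact: R1) ltac:(rewrite -B2; exact: R2) Hd.
rewrite -B1 -B2 in HU.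
have HV := H4 al (drop (size al) b1) (drop (size al) b2) ltac:(rewrite -B1; exact: R1) ltac:(rewrite -B2; exact: R2) Hd.
rewrite -B1 -B2 in HV.
have L1 : minn N (lcpn (apply phi b1) (apply phi b2)) =
          minn N (lcpn (apply psi b1) (apply psi b2)) by rewrite -!lcpn_takeN Q1 Q2.
have L2 : minn N (lcpn (apply phi b1) (apply psi b1)) = minn N (size (apply phi b1)).
  by rewrite -lcpn_takeN -Q1 lcpn_refl size_take_min.
have U1 := lcpn_ultra (apply phi b1) (apply phi al) (apply phi b2).
have U2 := lcpn_ultra (apply psi b1) (apply psi al) (apply psi b2).
have U3 := lcpn_ultra (apply phi al) (apply phi b1) (apply psi b1).
have U4 := lcpn_ultra (apply phi al) (apply psi b1) (apply psi al).
have S := lcpn_sizer (apply phi al) (apply phi b1).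
rewrite (lcpnC (apply phi b1)) in U1; rewrite (lcpnC (apply psi b1)) in U2.
rewrite (lcpnC (apply psi b1)) in U4.
change (dist (apply phi al) (apply psi al) <= 6 * (C1 + C2 + C3 + C4)).
rewrite dist_lcpn ?apply_reduced //; rewrite /N in L1 L2; lia.
Qed.
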